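(* Let $n\ge2$, $C>0$, $x\in\mathcal{K}_S$, and $\tilde{x}=x+\eta$ where $\eta$ has i.i.d. Laplace entries with mean $0$ and scale $b>0$ (density $\prod_i\frac{1}{2b}e^{-|\eta_i|/b}$). Let $f$ denote the probability density of $\pi_S(\tilde{x})$ with respect to the $(n-1)$-dimensional Lebesgue measure on the hyperplane $\mathcal{K}_S$. Then for every pair $(i,j)$ and every $y\in\mathcal{K}_S$ with $x_i\le x_j$ and $y_i\le y_j$, $$f(y)\ge f(\mathrm{sw}_{ij}(y)).$$
   Context: $\mathcal{K}_S=\{v\in\mathbb{R}^n:\sum_iv_i=C\}$ and $\pi_S$ is the Euclidean projection onto $\mathcal{K}_S$. $\mathrm{sw}_{ij}(y)$ is the vector obtained from $y$ by swapping its $i$-th and $j$-th entries. *)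

(* Defs.v *)
From HB Require Import structures.
From mathcomp Require Import all_boot all_order all_algebra.
From mathcomp Require Import all_classical all_reals all_analysis.
From mathcomp Require Import perm.
Set Implicit Arguments. Unset Strict Implicit. Unset Printing Implicit Defensive.
Import Order.TTheory GRing.Theory Num.Theory.
Local Open Scope ring_scope.

Section Defs.
Variable R : realType.

(* The n-dimensional Lebesgue integral (of nonnegative functions) on
   R^n = n.-tuple R, as the iterated one-dimensional Lebesgue integral
   (Tonelli). *)
Fixpoint leb_int (n : nat) : (n.-tuple R -> \bar R) -> \bar R :=
  match n return (n.-tuple R -> \bar R) -> \bar R with
  | 0 => fun g => g [tuple]
  | k.+1 => fun g =>
      (\int[@lebesgue_measure R]_t leb_int (fun v : k.-tuple R => g (cons_tuple t v)))%E
  end.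

Definition vsum n (v : n.-tuple R) : R := \sum_(i < n) tnth v i.

Definition KS n (C : R) : set (n.-tuple R) := [set v | vsum v = C].

Definition piS n (C : R) (v : n.-tuple R) : n.-tuple R :=
  [tuple tnth v i - (vsum v - C) / n%:R | i < n].

Definition vadd n (u v : n.-tuple R) : n.-tuple R :=
  [tuple tnth u i + tnth v i | i < n].

Definition sw n (i j : 'I_n) (y : n.-tuple R) : n.-tuple R :=
  [tuple tnth y (tperm i j k) | k < n].

Definition laplace_density n (b : R) (e : n.-tuple R) : R :=
  \prod_(i < n) ((2 * b)^-1 * expR (- `|tnth e i| / b)).

Definition hyp_param n (C : R) (y' : n.-1.-tuple R) : n.-tuple R :=
  [tuple (if (i : nat) == n.-1 then C - vsum y' else nth 0 y' i) | i < n].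

(* integral over K_S w.r.t. the (n-1)-dimensional Lebesgue (surface)
   measure on K_S; the parametrization above has area factor sqrt n *)
Definition hyp_int n (C : R) (g : n.-tuple R -> \bar R) : \bar R :=
  ((Num.sqrt (n%:R : R))%:E * leb_int (fun y' => g (hyp_param C y')))%E.

Definition is_density_projLaplace n (C b : R) (x : n.-tuple R)
    (f : n.-tuple R -> R) : Prop :=
  forall A : set (n.-tuple R), measurable A ->
    leb_int (fun e => ((\1_A (piS C (vadd x e)) : R)
                         * laplace_density b e)%:E)
    = hyp_int C (fun y => ((\1_A y : R) * f y)%:E).

Definition continuous_on_KS n (C : R) (f : n.-tuple R -> R) : Prop :=
  forall y, KS C y -> forall eps : R, 0 < eps -> exists2 delta : R, 0 < delta &
    forall z, KS C z -> (forall k, `|tnth z k - tnth y k| < delta) ->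
      `|f z - f y| < eps.

End Defs.

(* Main.v *)
Require Import Defs.
From HB Require Import structures.
From mathcomp Require Import all_boot all_order all_algebra perm.
From mathcomp Require Import all_classical all_reals all_analysis.
From mathcomp Require Import lra ring.
Set Implicit Arguments. Unset Strict Implicit. Unset Printing Implicit Defensive.
Import Order.TTheory GRing.Theory Num.Theory.
Import numFieldNormedType.Exports.
Local Open Scope classical_set_scope.
Local Open Scope ring_scope.

Section shift.
Variable R : realType.
Local Notation mu := (@lebesgue_measure R).

Lemma lebesgue_shift (s : R) (A : set (measurableTypeR R)) : measurable A ->
  mu ((fun t => t + s) @^-1` A) = mu A.
Proof.
move=> mA.
have mf : measurable_fun [set: measurableTypeR R] (fun t : measurableTypeR R => (t + s : measurableTypeR R)).
  by apply: measurable_realfun.measurable_funD => //; exact: measurable_cst.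
have := @lebesgue_measure_unique R (measure_function_pushforward__canonical__measure_function_Measure mu mf).
move=> H; rewrite -/(pushforward mu _ A); apply/esym/H => //.
move=> _ [[a b]] _ <-.
transitivity (mu ((fun t => t + s) @^-1` `]a, b]%classic)); last by [].
have -> : (fun t : R => t + s) @^-1` `]a, b]%classic = `](a - s), (b - s)]%classic.
  apply/seteqP; split => t /=; rewrite !in_itv /= => /andP[h1 h2];
  apply/andP; split; lra.
rewrite !lebesgue_measure_itv /= !lte_fin.
have -> : (a - s < b - s) = (a < b) by rewrite ltrD2r.
case: ifP => // _; rewrite -!EFinD; congr EFin; lra.
Qed.
End shift.

Import HBNNSimple.

Section shiftfun.
Variable R : realType.
Variables (h : {nnsfun measurableTypeR R >-> R}) (s : R).
Definition shf : measurableTypeR R -> R := fun t => h (t + s).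

Lemma shf_meas : measurable_fun [set: measurableTypeR R] shf.
Proof.
apply: (measurableT_comp (measurable_funPT h)).
by apply: measurable_realfun.measurable_funD => //; exact: measurable_cst.
Qed.
HB.instance Definition _ := isMeasurableFun.Build _ _ _ _ shf shf_meas.
Lemma shf_fin : finite_set (range shf).
Proof.
apply: (sub_finite_set _ (@fimfunP _ _ h)).
by move=> _ [t _ <-]; exists (t + s).
Qed.
HB.instance Definition _ := FiniteImage.Build _ _ shf shf_fin.
Lemma shf_ge0 t : 0 <= shf t.
Proof. exact: fun_ge0. Qed.
HB.instance Definition _ := isNonNegFun.Build _ _ shf shf_ge0.
Definition shnn : {nnsfun measurableTypeR R >-> R} := shf.
End shiftfun.

Section shiftint.
Variable R : realType.
Local Notation mu := (@lebesgue_measure R).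
Local Open Scope ereal_scope.

Lemma le_integral_shift (H : R -> \bar R) (s : R) : (forall t, 0 <= H t) ->
  \int[mu]_t H (t + s)%R <= \int[mu]_t H t.
Proof.
move=> H0; rewrite !ge0_integralTE //.
apply: ge_ereal_sup => _ [h hH <-].
apply: ereal_sup_ubound; exists (shnn h (- s)).
  by move=> t /=; rewrite /shf; have := hH (t - s)%R; rewrite subrK.
rewrite /sintegral; apply: eq_fsbigr => r _; congr (_ * _).
by apply: (lebesgue_shift (- s)); exact: measurable_funPTI.
Qed.

Lemma integral_shift (H : R -> \bar R) (s : R) : (forall t, 0 <= H t) ->
  \int[mu]_t H (t + s)%R = \int[mu]_t H t.
Proof.
move=> H0; apply/le_anti/andP; split; first exact: le_integral_shift.
have := @le_integral_shift (fun t => H (t + s)%R) (- s) (fun t => H0 _).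
by under eq_integral do rewrite subrK.
Qed.

Lemma ge0_le_integral_any (F G : R -> \bar R) : (forall t, 0 <= F t) ->
  (forall t, F t <= G t) -> \int[mu]_t F t <= \int[mu]_t G t.
Proof.
move=> F0 FG; have G0 t : 0 <= G t by apply: le_trans (FG t).
rewrite !ge0_integralTE //; apply: ge_ereal_sup => _ [h hH <-].
apply: ereal_sup_ubound; exists h => // t; exact: le_trans (FG t).
Qed.

Lemma le_integral_any (F G : R -> \bar R) :
  (forall t, F t <= G t) -> \int[mu]_t F t <= \int[mu]_t G t.
Proof.
move=> FG; rewrite integralE [leRHS]integralE; apply: leeB.
  apply: ge0_le_integral_any => t; first exact: funepos_ge0.
  by apply: (@funepos_le _ _ setT) => [x _|]; [exact: FG|exact: in_setT].
apply: ge0_le_integral_any => t; first exact: funeneg_ge0.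
by apply: (@funeneg_le _ _ setT) => [x _|]; [exact: FG|exact: in_setT].
Qed.
End shiftint.

Section lebint.
Variable R : realType.
Local Open Scope ereal_scope.

Lemma leb_int_ge0 n (g : n.-tuple R -> \bar R) : (forall v, 0 <= g v) ->
  0 <= leb_int g.
Proof.
elim: n g => [|n IH] g g0 /=; first exact: g0.
by apply: integral_ge0 => t _; apply: IH.
Qed.

Lemma leb_int_le n (g1 g2 : n.-tuple R -> \bar R) : (forall v, g1 v <= g2 v) ->
  leb_int g1 <= leb_int g2.
Proof.
elim: n g1 g2 => [|n IH] g1 g2 g12 /=; first exact: g12.
by apply: le_integral_any => t; apply: IH.
Qed.

Lemma vadd_cons n t (v s : n.-tuple R) (s0 : R) :
  vadd (cons_tuple t v) (cons_tuple s0 s) = cons_tuple (t + s0)%R (vadd v s).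
Proof.
apply: eq_from_tnth => i; rewrite tnth_mktuple.
case: i => [[|i] Hi].
  by rewrite !(tnth_nth (0%R:R)).
rewrite !(tnth_nth (0%R:R)) /=.
have Hi' : (i < n)%N by [].
rewrite (nth_map (Ordinal Hi')) ?size_enum_ord //.
have -> : nth (Ordinal Hi') (enum 'I_n) i = Ordinal Hi' by apply: val_inj => /=; rewrite nth_enum_ord.
by rewrite !(tnth_nth (0%R:R)).
Qed.

Lemma leb_int_shift n (s : n.-tuple R) (g : n.-tuple R -> \bar R) :
  (forall v, 0 <= g v) -> leb_int (fun e => g (vadd e s)) = leb_int g.
Proof.
elim: n s g => [|n IH] s g g0 /=.
  by congr g; rewrite !tuple0.
case/tupleP: s => s0 s.
transitivity (\int[@lebesgue_measure R]_t leb_int (fun v => g (cons_tuple (t + s0)%R v))).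
  apply: eq_integral => t _.
  rewrite -(IH s (fun v => g (cons_tuple (t + s0)%R v))) //.
  by congr leb_int; apply: funext => v; rewrite -(vadd_cons t v s s0).
rewrite (@integral_shift _ (fun t => leb_int (fun v => g (cons_tuple t v)))) //.
by move=> t; apply: leb_int_ge0.
Qed.

Definition inbox m (lo hi : nat -> R) (v : m.-tuple R) : bool :=
  all (fun k => (lo k < nth 0%R v k)%R && (nth 0%R v k < hi k)%R) (iota 0 m).

Lemma int_itv_cst (a b K : R) : (a < b)%R ->
  \int[@lebesgue_measure R]_t (if (a < t)%R && (t < b)%R then K else 0%R)%:E
  = (K * (b - a))%:E.
Proof.
move=> ab.
transitivity (\int[@lebesgue_measure R]_(t in `]a, b[%classic) (cst K%:E) t).
  rewrite [RHS]integral_mkcond; apply: eq_integral => t _.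
  rewrite /patch /= mem_setE in_itv /=.
  by case: ifP.
rewrite integral_cst //= lebesgue_measure_itv /= lte_fin ab.
by rewrite -EFinD -EFinM.
Qed.

Lemma inbox_cons m lo hi t (v : m.-tuple R) :
  inbox lo hi (cons_tuple t v) =
  ((lo 0 < t)%R && (t < hi 0)%R) && inbox (fun k => lo k.+1) (fun k => hi k.+1) v.
Proof.
rewrite /inbox /= -[1%N]/(1 + 0)%N iotaDl all_map.
by congr (_ && _).
Qed.

Lemma box_int m lo hi (c : R) : (forall k, lo k < hi k)%R ->
  leb_int (fun v : m.-tuple R => (if inbox lo hi v then c else 0%R)%:E)
  = (c * \prod_(k < m) (hi k - lo k))%:E.
Proof.
elim: m lo hi c => [|m IH] lo hi c lohi /=.
  by rewrite big_ord0 mulr1.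
transitivity (\int[@lebesgue_measure R]_t
   (if (lo 0 < t)%R && (t < hi 0)%R then c * \prod_(k < m) (hi k.+1 - lo k.+1) else 0%R)%:E).
  apply: eq_integral => t _.
  have -> : (fun v : m.-tuple R => (if inbox lo hi (cons_tuple t v) then c else 0%R)%:E)
    = (fun v => (if inbox (fun k => lo k.+1) (fun k => hi k.+1) v then
                 (if (lo 0 < t)%R && (t < hi 0)%R then c else 0%R) else 0%R)%:E).
    apply: funext => v; rewrite inbox_cons.
    by case: (lo 0 < t < hi 0)%R; case: inbox.
  rewrite IH //; case: (lo 0 < t < hi 0)%R => //.
  by rewrite mul0r.
rewrite int_itv_cst // big_ord_recl /=.
by congr EFin; ring.
Qed.
End lebint.

Section alg.
Variable R : realType.

Lemma piS_tnth n (C : R) (v : n.-tuple R) k :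
  tnth (piS C v) k = tnth v k - (vsum v - C) / n%:R.
Proof. by rewrite tnth_mktuple. Qed.

Lemma vadd_tnth n (u v : n.-tuple R) k : tnth (vadd u v) k = tnth u k + tnth v k.
Proof. by rewrite tnth_mktuple. Qed.

Lemma vsum_vadd n (u v : n.-tuple R) : vsum (vadd u v) = vsum u + vsum v.
Proof. by rewrite /vsum -big_split /=; apply: eq_bigr => k _; rewrite vadd_tnth. Qed.

Lemma piS_KS n (C : R) (v : n.-tuple R) : (0 < n)%N -> KS C (piS C v).
Proof.
move=> n0; rewrite /KS /= /vsum.
under eq_bigr do rewrite piS_tnth.
rewrite sumrB sumr_const card_ord -/(vsum v).
have nz : (n%:R : R) != 0 by rewrite pnatr_eq0 -lt0n.
rewrite -[_ *+ n]mulr_natr divfK //.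
by rewrite opprB addrC subrK.
Qed.

Lemma hp_tnth n (C : R) (y' : n.-1.-tuple R) (k : 'I_n) : (k < n.-1)%N ->
  tnth (hyp_param C y') k = nth 0 y' k.
Proof. by move=> hk; rewrite tnth_mktuple ltn_eqF. Qed.

Lemma hp_KS n (C : R) (y' : n.-1.-tuple R) : (0 < n)%N -> KS C (hyp_param C y').
Proof.
case: n y' => // n y' _; rewrite /KS /= /vsum big_ord_recr /=.
rewrite tnth_mktuple eqxx.
rewrite (eq_bigr (fun k => tnth y' k)); first by rewrite addrC subrK.
move=> k _; rewrite hp_tnth /=; last exact: ltn_ord.
by rewrite (tnth_nth 0).
Qed.


Lemma abs_ineq (p q c D : R) : 0 <= c -> 0 <= c + q - p -> c + q - p <= D ->
  `|p| + `|q| <= `|p + D| + `|q - D|.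
Proof.
move=> c0 s0 sD.
have [hp|hp] := lerP 0 p; [rewrite (ger0_norm hp)|rewrite (ltr0_norm hp)];
have [hq|hq] := lerP 0 q; [rewrite (ger0_norm hq)|rewrite (ltr0_norm hq)|
  rewrite (ger0_norm hq)|rewrite (ltr0_norm hq)];
have [h1|h1] := lerP 0 (p + D); [rewrite (ger0_norm h1)|rewrite (ltr0_norm h1)|
  rewrite (ger0_norm h1)|rewrite (ltr0_norm h1)|rewrite (ger0_norm h1)|rewrite (ltr0_norm h1)|
  rewrite (ger0_norm h1)|rewrite (ltr0_norm h1)];
have [h2|h2] := lerP 0 (q - D); rewrite ?(ger0_norm h2) ?(ltr0_norm h2); lra.
Qed.

Lemma lap_ge0 n (b : R) (e : n.-tuple R) : 0 < b -> 0 <= laplace_density b e.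
Proof.
move=> b0; apply: prodr_ge0 => k _; apply: mulr_ge0; last exact: expR_ge0.
by rewrite invr_ge0; apply: mulr_ge0 => //; exact: ltW.
Qed.

Lemma lap_cmp n (b D : R) (i j : 'I_n) (e d : n.-tuple R) : 0 < b -> i != j ->
  tnth d i = D -> tnth d j = - D -> (forall k, k != i -> k != j -> tnth d k = 0) ->
  `|tnth e i| + `|tnth e j| <= `|tnth e i + D| + `|tnth e j - D| ->
  laplace_density b (vadd e d) <= laplace_density b e.
Proof.
move=> b0 ij di dj dk H.
have ji : j != i by rewrite eq_sym.
rewrite /laplace_density (bigD1 i) //= [in X in _ <= X](bigD1 i) //=.
rewrite (bigD1 j) //= [in X in _ <= X](bigD1 j) //=.
set P1 := \prod_(k | _) _; set P2 := \prod_(k | _) _.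
have -> : P1 = P2.
  apply: eq_bigr => k /andP[ki kj]; by rewrite vadd_tnth dk // addr0.
have P20 : 0 <= P2.
  apply: prodr_ge0 => k _; apply: mulr_ge0; last exact: expR_ge0.
  by rewrite invr_ge0; apply: mulr_ge0 => //; exact: ltW.
rewrite !mulrA; apply: ler_wpM2r => //.
rewrite !vadd_tnth di dj.
set c := (2 * b)^-1.
have -> : c * expR (- `|tnth e i + D| / b) * c * expR (- `|tnth e j - D| / b)
  = c * c * expR (- (`|tnth e i + D| + `|tnth e j - D|) / b).
  by rewrite opprD mulrDl expRD; ring.
have -> : c * expR (- `|tnth e i| / b) * c * expR (- `|tnth e j| / b)
  = c * c * expR (- (`|tnth e i| + `|tnth e j|) / b).
  by rewrite opprD mulrDl expRD; ring.
apply: ler_wpM2l.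
  by apply: mulr_ge0; rewrite invr_ge0; apply: mulr_ge0 => //; exact: ltW.
rewrite ler_expR !mulNr lerN2 ler_pM2r //; by rewrite invr_gt0.
Qed.

Lemma geo n (C eta : R) (w z : n.-tuple R) (o : 'I_n -> R) : (0 < n)%N ->
  KS C w -> KS C z -> \sum_k o k = 0 -> 0 <= eta ->
  (forall k : 'I_n, (k < n.-1)%N -> `|tnth z k - tnth w k - o k| <= eta) ->
  forall k, `|tnth z k - tnth w k - o k| <= n%:R * eta.
Proof.
case: n w z o => // n w z o _ Kw Kz o0 eta0 H k.
have hle : eta <= n.+1%:R * eta.
  by rewrite -[X in X <= _]mul1r ler_wpM2r // ler1n.
have [->|hk] := eqVneq k ord_max; last first.
  apply: le_trans hle; apply: H => /=.
  rewrite ltn_neqAle -ltnS ltn_ord andbT.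
  by apply: contra hk => /eqP hk; apply/eqP/val_inj.
set r := fun k => tnth z k - tnth w k - o k.
have rs : \sum_(k < n.+1) r k = 0.
  rewrite /r !sumrB o0 subr0.
  by move: Kw Kz; rewrite /KS /= /vsum => -> ->; rewrite subrr.
move: rs; rewrite big_ord_recr /= => /eqP; rewrite addrC addr_eq0 => /eqP rm.
rewrite -/(r ord_max) rm normrN.
apply: le_trans (Num.Theory.ler_norm_sum _ _ _) _.
apply: le_trans (_ : \sum_(k < n) eta <= _).
  apply: ler_sum => l _; apply: H => /=; exact: ltn_ord.
rewrite sumr_const card_ord -[eta *+ n]mulr_natl ler_wpM2r // ler_nat.
by [].
Qed.

Lemma sw_tnth n (i j : 'I_n) (y : n.-tuple R) k : tnth (sw i j y) k = tnth y (tperm i j k).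
Proof. by rewrite tnth_mktuple. Qed.

Lemma vsum_sw n (i j : 'I_n) (y : n.-tuple R) : vsum (sw i j y) = vsum y.
Proof.
rewrite /vsum; under eq_bigr do rewrite sw_tnth.
by rewrite [RHS](reindex_inj (@perm_inj _ (tperm i j))).
Qed.

Definition Acyl n (eta : R) (cv : n.-tuple R) : set (n.-tuple R) :=
  [set z | forall k : 'I_n, (k < n.-1)%N -> tnth cv k - eta < tnth z k < tnth cv k + eta].

Lemma Acyl_meas n eta (cv : n.-tuple R) : measurable (Acyl eta cv).
Proof.
have -> : Acyl eta cv = \bigcap_(k in [set: 'I_n])
    [set z : n.-tuple R | (k < n.-1)%N -> tnth cv k - eta < tnth z k < tnth cv k + eta].
  by apply/seteqP; split => z /= H k; [move=> _|]; apply: H.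
apply: fin_bigcap_measurable; first exact: finite_finset.
move=> k _.
rewrite [X in measurable X](_ : _ = if (k < n.-1)%N then
   [set: n.-tuple R] `&` (@tnth _ R ^~ k) @^-1` `](tnth cv k - eta), (tnth cv k + eta)[%classic
   else setT); last first.
  apply/seteqP; split => z /=; case: ifP => hk //=.
    by move=> H; split => //; rewrite in_itv /=; apply: H.
  by move=> [_]; rewrite in_itv /=.
case: ifP => _; last exact: measurableT.
by apply: measurable_tnth => //; exact: measurable_itv.
Qed.

Lemma mem_Acyl n (C eta : R) (cv : n.-tuple R) (y' : n.-1.-tuple R) : (0 < n)%N ->
  (hyp_param C y' \in Acyl eta cv) =
  inbox (fun k : nat => nth 0 cv k - eta) (fun k : nat => nth 0 cv k + eta) y'.
Proof.
move=> n0; apply/idP/idP.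
  move/set_mem => H; apply/allP => k; rewrite mem_iota add0n => /andP[_ hk].
  have hkn : (k < n)%N by apply: leq_trans hk _; rewrite leq_pred.
  have := H (Ordinal hkn) hk.
  by rewrite hp_tnth // !(tnth_nth 0).
move/allP => H; apply/mem_set => k hk.
have := H k; rewrite mem_iota add0n hk => /(_ isT).
by rewrite hp_tnth // !(tnth_nth 0).
Qed.

End alg.

Unset Implicit Arguments.
Set Strict Implicit.
Local Close Scope classical_set_scope.

Theorem lemma10 (R : realType) (n : nat) (C b : R) (x : n.-tuple R)
    (f : n.-tuple R -> R) :
  (2 <= n)%N -> 0 < C -> 0 < b -> KS C x ->
  continuous_on_KS C f ->
  is_density_projLaplace C b x f ->
  forall (i j : 'I_n) (y : n.-tuple R), KS C y ->
    tnth x i <= tnth x j -> tnth y i <= tnth y j ->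
    f (sw i j y) <= f y.
Proof.
move=> n2 C0 b0 Kx fc fd i j y Ky xij yij.
have n0 : (0 < n)%N by apply: leq_trans n2.
set sy := sw i j y.
have Ksy : KS C sy by rewrite /KS /= vsum_sw.
have [yeq|ylt] := eqVneq (tnth y i) (tnth y j).
  suff -> : sy = y by [].
  apply: eq_from_tnth => k; rewrite sw_tnth.
  by case: tpermP => [->|->|] //.
have {yij ylt} yij : tnth y i < tnth y j by rewrite lt_neqAle ylt yij.
have ij : i != j by apply: contraTneq yij => ->; rewrite ltxx.
rewrite leNgt; apply/negP => hlt.
set D := tnth y j - tnth y i.
have D0 : 0 < D by rewrite subr_gt0.
set eps := (f sy - f y) / 3.
have eps0 : 0 < eps by apply: divr_gt0; rewrite ?subr_gt0.
have [d1 d10 Hd1] := fc y Ky eps eps0.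
have [d2 d20 Hd2] := fc sy Ksy eps eps0.
set del := Num.min d1 d2.
have del0 : 0 < del by rewrite lt_min d10 d20.
set a := Num.min (del / 2) (D / 4).
have a0 : 0 < a by rewrite lt_min !divr_gt0.
have a1 : a <= del / 2 by rewrite ge_min lexx.
have a2 : a <= D / 4 by rewrite ge_min lexx orbT.
have nR0 : (0 : R) < n%:R by rewrite ltr0n.
set eta := a / (4 * n%:R).
have eta0 : 0 < eta by apply: divr_gt0 => //; apply: mulr_gt0.
have neta : n%:R * eta = a / 4.
  by rewrite /eta; field; rewrite gt_eqF.
set o := fun k : 'I_n => if k == i then a else if k == j then - a else 0.
have o0 : \sum_k o k = 0.
  rewrite (bigD1 i) //= (bigD1 j) 1?eq_sym //= big1 /o.
    by rewrite eqxx eq_sym (negbTE ij) eqxx; lra.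
  by move=> k /andP[ki kj]; rewrite (negbTE ki) (negbTE kj).
have oi : o i = a by rewrite /o eqxx.
have oj : o j = - a by rewrite /o eq_sym (negbTE ij) eqxx.
have ob k : - a <= o k <= a.
  rewrite /o; case: ifP => _; first lra.
  case: ifP => _; lra.
have Gen (w z : n.-tuple R) : KS C w -> KS C z ->
    Acyl eta [tuple tnth w k + o k | k < n] z ->
    forall k, - (a / 4) <= tnth z k - tnth w k - o k <= a / 4.
  move=> Kw Kz Az k; rewrite -ler_norml -neta.
  apply: (geo n0 Kw Kz o0 (ltW eta0)) => l hl.
  have := Az l hl; rewrite tnth_mktuple => /andP[h1 h2].
  rewrite ler_norml; apply/andP; split; lra.
have Gnear (w z : n.-tuple R) : KS C w -> KS C z ->
    Acyl eta [tuple tnth w k + o k | k < n] z ->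
    forall k, `|tnth z k - tnth w k| < del.
  move=> Kw Kz Az k; have := Gen w z Kw Kz Az k => /andP[h1 h2].
  have := ob k => /andP[h3 h4].
  rewrite ltr_norml; apply/andP; split; lra.
have del1 : del <= d1 by rewrite ge_min lexx.
have del2 : del <= d2 by rewrite ge_min lexx orbT.
set cy := [tuple tnth y k + o k | k < n].
set cs := [tuple tnth sy k + o k | k < n].
set A := Acyl eta cy.
set A' := Acyl eta cs.
have Gord z : KS C z -> A z -> 0 <= tnth z j - tnth z i <= D.
  move=> Kz Az.
  have := Gen y z Ky Kz Az i; rewrite oi => /andP[h1 h2].
  have := Gen y z Ky Kz Az j; rewrite oj => /andP[h3 h4].
  have hD : D = tnth y j - tnth y i by [].
  apply/andP; split; lra.
have C1 z : KS C z -> A z -> f z <= f y + eps.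
  move=> Kz Az; have := Hd1 z Kz (fun k => lt_le_trans (Gnear y z Ky Kz Az k) del1).
  rewrite ltr_norml => /andP[_ h]; lra.
have C2 z : KS C z -> A' z -> f sy - eps <= f z.
  move=> Kz Az; have := Hd2 z Kz (fun k => lt_le_trans (Gnear sy z Ksy Kz Az k) del2).
  rewrite ltr_norml => /andP[h _]; lra.
set V := \prod_(k < n.-1) (2 * eta).
have V0 : 0 < V by apply: prodr_gt0 => k _; apply: mulr_gt0.
have HB (cv : n.-tuple R) c :
    leb_int (fun v : n.-1.-tuple R => (if inbox (fun k : nat => nth 0 cv k - eta)
      (fun k : nat => nth 0 cv k + eta) v then c else 0)%:E) = (c * V)%:E.
  rewrite box_int; last by move=> k; lra.
  by congr EFin; congr (_ * _); apply: eq_bigr => k _; lra.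
have sq0 : ((0%R)%:E <= (Num.sqrt (n%:R : R))%:E)%E by rewrite lee_fin sqrtr_ge0.
have H1 : (hyp_int C (fun y0 => ((\1_A y0 : R) * f y0)%:E) <=
           (Num.sqrt (n%:R : R) * ((f y + eps) * V))%:E)%E.
  rewrite /hyp_int EFinM; apply: lee_wpmul2l => //.
  rewrite -(HB cy); apply: leb_int_le => v.
  rewrite indicE mem_Acyl //; case: ifP => h; last by rewrite mul0r.
  rewrite mul1r lee_fin; apply: C1; first exact: hp_KS.
  by apply: set_mem; rewrite /A mem_Acyl.
have H2 : ((Num.sqrt (n%:R : R) * ((f sy - eps) * V))%:E <=
           hyp_int C (fun y0 => ((\1_A' y0 : R) * f y0)%:E))%E.
  rewrite /hyp_int EFinM; apply: lee_wpmul2l => //.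
  rewrite -(HB cs); apply: leb_int_le => v.
  rewrite indicE mem_Acyl //; case: ifP => h; last by rewrite mul0r.
  rewrite mul1r lee_fin; apply: C2; first exact: hp_KS.
  by apply: set_mem; rewrite /A' mem_Acyl.
set d := [tuple tnth sy k - tnth y k | k < n].
set nd := [tuple - tnth d k | k < n].
have vnd : vsum nd = 0.
  rewrite /vsum; under eq_bigr do rewrite tnth_mktuple tnth_mktuple.
  by rewrite sumrN sumrB -/(vsum sy) -/(vsum y) vsum_sw subrr oppr0.
have di : tnth d i = D by rewrite tnth_mktuple sw_tnth tpermL.
have dj : tnth d j = - D by rewrite tnth_mktuple sw_tnth tpermR opprB.
have dk k : k != i -> k != j -> tnth d k = 0.
  by move=> ki kj; rewrite tnth_mktuple sw_tnth tpermD 1?eq_sym // subrr.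
set G := fun e : n.-tuple R => ((\1_A (piS C (vadd x e)) : R) * laplace_density b (vadd e d))%:E.
have P1 : leb_int (fun e => ((\1_A' (piS C (vadd x e)) : R) * laplace_density b e)%:E)
    = leb_int (fun e => G (vadd e nd)).
  congr leb_int; apply: funext => e; rewrite /G.
  have E1 : vadd (vadd e nd) d = e.
    by apply: eq_from_tnth => k; rewrite !vadd_tnth tnth_mktuple addrNK.
  have E2 k : tnth (piS C (vadd x (vadd e nd))) k = tnth (piS C (vadd x e)) k - tnth d k.
    rewrite !piS_tnth !vsum_vadd vnd addr0 !vadd_tnth tnth_mktuple.
    by lra.
  rewrite E1 !indicE.
  suff -> : (piS C (vadd x e) \in A') = (piS C (vadd x (vadd e nd)) \in A) by [].
  apply/idP/idP => /set_mem H; apply/mem_set => k hk; have := H k hk;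
    rewrite ?E2 !tnth_mktuple => /andP[h1 h2]; apply/andP; split; lra.
have G0 e : (0%R%:E <= G e)%E.
  rewrite /G lee_fin; apply: mulr_ge0; first by rewrite indicE.
  exact: lap_ge0.
have P2 : leb_int (fun e => G (vadd e nd)) = leb_int G by apply: leb_int_shift.
have P3 : (leb_int G <= leb_int (fun e => ((\1_A (piS C (vadd x e)) : R) * laplace_density b e)%:E))%E.
  apply: leb_int_le => e; rewrite /G indicE lee_fin.
  case: (boolP (piS C (vadd x e) \in A)) => H; last by rewrite !mul0r.
  rewrite !mul1r; apply: (lap_cmp b0 ij di dj dk).
  have := Gord _ (piS_KS C (vadd x e) n0) (set_mem H) => /andP[h1 h2].
  rewrite !piS_tnth !vadd_tnth in h1 h2.
  apply: (@abs_ineq _ _ _ (tnth x j - tnth x i)); lra.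
have := fd A' (Acyl_meas _ _); rewrite P1 P2 => EA'.
have := fd A (Acyl_meas _ _) => EA.
rewrite -EA' in H2; rewrite -EA in H1.
have := le_trans H2 (le_trans P3 H1).
rewrite lee_fin => H3.
have sqn0 : 0 < Num.sqrt (n%:R : R) by rewrite sqrtr_gt0.
have : (f sy - eps) * V <= (f y + eps) * V.
  by rewrite -(ler_pM2l sqn0).
rewrite ler_pM2r // => H4.
have : f sy - f y = 3 * eps by rewrite /eps; field.
lra.
Qed.
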